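(* For every twin-free forest $F$ of order $n \ge 2$, we have $i_{\max}(F) \ge f(n-1)$.
   Context: $i_{\max}(F)$ denotes the number of maximal independent sets of $F$. A graph is twin-free if no two vertices have the same open neighbourhood. The function $f$ is defined by $f(1)=1$, $f(2)=f(3)=2$, and for $n\ge 4$: $f(n)=4\cdot 3^{n/5-1}$ if $n\equiv 0 \pmod 5$; $5\cdot 3^{(n-6)/5}$ if $n\equiv 1$; $2\cdot 3^{(n-2)/5}$ if $n\equiv 2$; $8\cdot 3^{(n-8)/5}$ if $n\equiv 3$; $3^{(n+1)/5}$ if $n\equiv 4 \pmod 5$. *)

(* Defs.v *)
From mathcomp Require Import all_boot.
Set Implicit Arguments. Unset Strict Implicit. Unset Printing Implicit Defensive.

(* A simple graph on a finite vertex type T is a symmetric irreflexive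
   relation e : rel T. *)

Definition acyclic (T : finType) (e : rel T) : Prop :=
  forall s : seq T, uniq s -> 3 <= size s -> ~~ cycle e s.

Definition is_forest (T : finType) (e : rel T) : Prop :=
  symmetric e /\ irreflexive e /\ acyclic e.

Definition nbhd (T : finType) (e : rel T) (x : T) : {set T} := [set y | e x y].

Definition twin_free (T : finType) (e : rel T) : Prop :=
  forall x y : T, x != y -> nbhd e x != nbhd e y.

Definition independent (T : finType) (e : rel T) (S : {set T}) : bool :=
  [forall x in S, forall y in S, ~~ e x y].

Definition imax (T : finType) (e : rel T) : nat :=
  #|[set S : {set T} | maxset (independent e) S]|.

(* The function f of the paper (f 0 is irrelevant, set to 0). *)
Definition f (n : nat) : nat :=
  match n with
  | 0 => 0
  | 1 => 1
  | 2 => 2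
  | 3 => 2
  | _ =>
    match n %% 5 with
    | 0 => 4 * 3 ^ (n %/ 5 - 1)
    | 1 => 5 * 3 ^ ((n - 6) %/ 5)
    | 2 => 2 * 3 ^ ((n - 2) %/ 5)
    | 3 => 8 * 3 ^ ((n - 8) %/ 5)
    | _ => 3 ^ ((n + 1) %/ 5)
    end
  end.

Example f_check : [seq f n | n <- iota 1 12] = [:: 1; 2; 2; 3; 4; 5; 6; 8; 9; 12; 15; 18].
Proof. by []. Qed.

(* Main.v *)
Require Import Defs.
From mathcomp Require Import all_boot zify.
Set Implicit Arguments. Unset Strict Implicit. Unset Printing Implicit Defensive.

Definition g (n : nat) : nat :=
  match n with 0 => 1 | 1 => 2 | 3 => 3 | _ => f n end.

Lemma fS5 m : f (m.+4 + 5) = 3 * f m.+4.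
Proof.
have -> : m.+4 + 5 = m.+4.+4.+1 by rewrite addnC.
rewrite /f.
have E : m.+4.+4.+1 %% 5 = m.+4 %% 5 by lia.
rewrite E.
have H5 : m.+4 %% 5 < 5 by rewrite ltn_mod.
case Er: (m.+4 %% 5) H5 => [|[|[|[|[|r]]]]] // _.
- have -> : m.+4.+4.+1 %/ 5 - 1 = (m.+4 %/ 5 - 1).+1 by lia.
  by rewrite expnS mulnCA.
- have -> : (m.+4.+4.+1 - 6) %/ 5 = ((m.+4 - 6) %/ 5).+1 by lia.
  by rewrite expnS mulnCA.
- have -> : (m.+4.+4.+1 - 2) %/ 5 = ((m.+4 - 2) %/ 5).+1 by lia.
  by rewrite expnS mulnCA.
- have -> : (m.+4.+4.+1 - 8) %/ 5 = ((m.+4 - 8) %/ 5).+1 by lia.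
  by rewrite expnS mulnCA.
- have -> : (m.+4.+4.+1 + 1) %/ 5 = ((m.+4 + 1) %/ 5).+1 by lia.
  by rewrite expnS.
Qed.

Lemma gS5 n : 4 <= n -> g (n + 5) = 3 * g n.
Proof.
case: n => [|[|[|[|m]]]] // _.
rewrite -fS5.
by have -> : m.+4 + 5 = m.+4.+4.+1 by rewrite addnC.
Qed.

Lemma gsh n k : k + 9 <= n -> g (n - k) = 3 * g (n - 5 - k).
Proof.
move=> H; have -> : n - k = (n - 5 - k) + 5 by lia.
by rewrite gS5 //; lia.
Qed.

Lemma g_ind (P : nat -> Prop) : (forall n, n < 16 -> P n) ->
  (forall n, 16 <= n -> P (n - 5) -> P n) -> forall n, P n.
Proof.
move=> Hb Hs n; elim: n {-2}n (leqnn n) => [|N IH] n Hn.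
  by apply: Hb; lia.
case: (ltnP n 16) => [/Hb //|H16]; apply: Hs => //; apply: IH; lia.
Qed.

Ltac gE n k := let E := fresh "E" in
  have E := @gsh n k ltac:(lia); rewrite ?subn0 in E.

Lemma g_mono1 n : g n <= g n.+1.
Proof.
elim/g_ind: n => [n|n H16 IH]; first by do 16! case: n => [//|n].
have E1 := @gsh n 0 ltac:(lia); have E2 := @gsh n.+1 0 ltac:(lia).
rewrite !subn0 in E1 E2.
have X : n.+1 - 5 = (n - 5).+1 by lia.
rewrite X in E2; lia.
Qed.

Lemma g_mono m n : m <= n -> g m <= g n.
Proof.
move=> H; rewrite -(subnKC H); elim: (n - m) => [|k IH]; first by rewrite addn0.
by rewrite addnS; apply: leq_trans IH (g_mono1 _).
Qed.

Lemma f_le_g n : f n <= g n.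
Proof. by case: n => [|[|[|[|n]]]]. Qed.

Lemma ineqK2 n : g n <= 2 * g (n - 2).
Proof.
elim/g_ind: n => [n|n H16 IH]; first by do 16! case: n => [//|n].
gE n 0; gE n 2; lia.
Qed.

Lemma ineqE1 n : g n <= g (n - 2) + g (n - 4).
Proof.
elim/g_ind: n => [n|n H16 IH]; first by do 16! case: n => [//|n].
gE n 0; gE n 2; gE n 4; lia.
Qed.

Lemma ineqE3 n : 4 <= n -> g n <= 2 * g (n - 3).
Proof.
elim/g_ind: n => [n|n H16 IH]; first by do 16! case: n => [//|n].
move=> _; have {}IH := IH ltac:(lia).
gE n 0; gE n 3; lia.
Qed.

Lemma ineqE4 n : g n <= 2 * g (n - 5) + g (maxn (n - 5) 2).
Proof.
elim/g_ind: n => [n|n H16 IH]; first by do 16! case: n => [//|n].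
have -> : maxn (n - 5) 2 = n - 5 by lia.
have X : maxn (n - 5 - 5) 2 = n - 5 - 5 by lia.
rewrite X in IH.
gE n 0; gE n 5; lia.
Qed.

Lemma ineqE5 n : g n <= g (n - 2) + 2 * g (n - 7).
Proof.
elim/g_ind: n => [n|n H16 IH]; first by do 16! case: n => [//|n].
gE n 0; gE n 2; gE n 7; lia.
Qed.


Section S.
Variable (T : finType) (e : rel T).
Hypothesis esym : symmetric e.
Hypothesis eirr : irreflexive e.

Definition N (V : {set T}) x := [set y in V | e x y].
Definition mis (V S : {set T}) :=
  [&& S \subset V, independent e S & [forall x in V, (x \in S) || [exists y in S, e x y]]].
Definition im V := #|[set S | mis V S]|.

Lemma setD1I (A : {set T}) a b : a \in A -> a != b -> a \in A :\ b.
Proof. by rewrite in_setD1 => -> ->. Qed.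

Lemma eq_sym_neq (a b : T) : a != b -> b != a.
Proof. by rewrite eq_sym. Qed.

Lemma inN (V : {set T}) x y : (y \in N V x) = (y \in V) && e x y.
Proof. by rewrite inE. Qed.

Lemma misP (V S : {set T}) : reflect
  [/\ S \subset V, (forall x y, x \in S -> y \in S -> ~~ e x y) &
      (forall x, x \in V -> x \notin S -> exists2 y, y \in S & e x y)] (mis V S).
Proof.
apply: (iffP and3P) => [[H1 /forallP H2 /forallP H3]|[H1 H2 H3]]; split => //.
- move=> x y xS yS; move: (H2 x); rewrite xS /= => /forallP /(_ y); by rewrite yS.
- move=> x xV xS; move: (H3 x); rewrite xV (negbTE xS) /= => /existsP [y /andP [yS exy]].
  by exists y.
- apply/forallP => x; apply/implyP => xS; apply/forallP => y; apply/implyP => yS; exact: H2.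
- apply/forallP => x; apply/implyP => xV; case xS: (x \in S) => //=.
  have [y yS exy] := H3 x xV (negbT xS); apply/existsP; exists y; by rewrite yS.
Qed.

Lemma card_contain (V : {set T}) x : x \in V ->
  #|[set S | mis V S & x \in S]| = im (V :\: (x |: N V x)).
Proof.
move=> xV; set V' := V :\: (x |: N V x).
have xV' : x \notin V' by rewrite !inE eqxx.
have -> : [set S | mis V S & x \in S] = (fun S' => x |: S') @: [set S' | mis V' S'].
  apply/setP => S; rewrite !inE; apply/idP/imsetP.
  - case/andP => /misP [SV Sind Sdom] xS; exists (S :\ x); last by rewrite setD1K.
    rewrite inE; apply/misP; split.
    + apply/subsetP => y; rewrite !inE => /andP [yx yS].
      have yV := subsetP SV _ yS.
      by rewrite yV andbT negb_or yx /= (Sind _ _ xS yS).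
    + by move=> a b; rewrite !inE => /andP [_ aS] /andP [_ bS]; apply: Sind.
    + move=> z; rewrite !inE negb_or => /andP [/andP [zx zN] zV].
      rewrite (negbTE zx) /= => zS.
      have [y yS ezy] := Sdom z zV zS; exists y => //.
      have yx : y != x.
        by apply/eqP => yx; subst y; move: zN; rewrite zV /= esym ezy.
      by rewrite !inE yS yx.
  - case=> S' /[!inE] /misP [S'V S'ind S'dom] ->; rewrite setU11 andbT.
    have S'V0 : forall y, y \in S' -> y \in V /\ ~~ e x y.
      move=> y /(subsetP S'V); rewrite !inE negb_or => /andP [/andP [_ yN] yV].
      by move: yN; rewrite yV.
    apply/misP; split.
    + apply/subsetP => y; rewrite !inE => /orP [/eqP -> //|/S'V0 []//].
    + move=> a b; rewrite !inE => /orP [/eqP ->|aS] /orP [/eqP ->|bS].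
      * by rewrite eirr.
      * by case: (S'V0 _ bS).
      * by case: (S'V0 _ aS); rewrite esym.
      * exact: S'ind.
    + move=> z zV; rewrite !inE negb_or => /andP [zx zS].
      case zN: (z \in N V x).
        exists x; first by rewrite !inE eqxx.
        by move: zN; rewrite inE esym => /andP [].
      have zV' : z \in V' by rewrite in_setD in_setU1 negb_or zx zN zV.
      have [y yS ezy] := S'dom z zV' zS; exists y => //; by rewrite !inE yS orbT.
rewrite card_in_imset // => A B; rewrite !inE => /misP [AV _ _] /misP [BV _ _] eAB.
apply/setP => y; case: (y =P x) => [->|/eqP yx].
  by rewrite (negbTE (contra (subsetP AV x) xV')) (negbTE (contra (subsetP BV x) xV')).
by move/setP: eAB => /(_ y); rewrite !inE (negbTE yx).
Qed.


Lemma leaf_split (V : {set T}) u v : u \in V -> N V u = [set v] ->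
  im V = im (V :\: (u |: N V u)) + im (V :\: (v |: N V v)).
Proof.
move=> uV Nu.
have : v \in N V u by rewrite Nu set11.
rewrite inE => /andP [vV euv].
rewrite -card_contain // -card_contain // {1}/im.
have -> : [set S | mis V S] =
  [set S | mis V S & u \in S] :|: [set S | mis V S & v \in S].
  apply/setP => S; rewrite !inE; case M: (mis V S) => //=.
  case uS: (u \in S) => //=.
  move/misP: M => [SV _ Sdom]; have [y yS ey] := Sdom u uV (negbT uS).
  have : y \in N V u by rewrite inE (subsetP SV _ yS).
  by rewrite Nu inE => /eqP <-.
rewrite cardsU.
have -> : [set S | mis V S & u \in S] :&: [set S | mis V S & v \in S] = set0.
  apply/setP => S; rewrite !inE; apply/negbTE.
  apply/negP => /andP [/andP [/misP [_ Sind _] uS] /andP [_ vS]].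
  by move: (Sind _ _ uS vS); rewrite euv.
by rewrite cards0 subn0.
Qed.

Lemma twin_rm (V : {set T}) x y : x \in V -> y \in V -> x != y -> N V x = N V y ->
  im V = im (V :\ x).
Proof.
move=> xV yV xy Nxy.
have eq_xy : forall z, z \in V -> e x z = e y z.
  by move=> z zV; move/setP: Nxy => /(_ z); rewrite !inE zV.
have Hxy : forall S, mis V S -> (x \in S) = (y \in S).
  move=> S /misP [SV Sind Sdom].
  have H : forall a b, a \in V -> b \in V -> (forall z, z \in V -> e a z = e b z) ->
             a \in S -> b \in S.
    move=> a b aV bV eab aS; apply/negPn/negP => bS.
    have [z zS ebz] := Sdom b bV bS.
    by move: (Sind _ _ aS zS); rewrite eab ?ebz // (subsetP SV).
  apply/idP/idP; first by apply: H.
  by apply: H => // z zV; rewrite eq_xy.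
pose lift (S' : {set T}) := if y \in S' then x |: S' else S'.
rewrite /im; have -> : [set S | mis V S] = lift @: [set S' | mis (V :\ x) S'].
  apply/setP => S; rewrite inE; apply/idP/imsetP.
  - move=> M; exists (S :\ x).
      rewrite inE; move/misP: M => [SV Sind Sdom]; apply/misP; split.
      + by apply: setSD.
      + by move=> a b /setD1P [_ aS] /setD1P [_ bS]; apply: Sind.
      + move=> z /setD1P [zx zV] zS.
        have zS' : z \notin S by apply: contra zS => zS; rewrite !inE zx zS.
        have [t tS ezt] := Sdom z zV zS'.
        case: (t =P x) => [tx|/eqP tx].
          subst t; exists y.
            rewrite !inE eq_sym xy /= -(Hxy S) //; exact/misP.
          by rewrite esym -eq_xy // esym.
        by exists t => //; rewrite !inE tx.
    rewrite /lift !inE eq_sym xy /=.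
    have -> : (y \in S) = (x \in S) by rewrite (Hxy S).
    case xS: (x \in S); first by rewrite setD1K.
    by apply/setP => z; rewrite !inE; case: (z =P x) => // ->; rewrite xS.
  - case=> S' /[!inE] /misP [S'V S'ind S'dom] ->.
    have S'x : x \notin S' by apply/negP => /(subsetP S'V); rewrite !inE eqxx.
    have S'V' : S' \subset V by apply: subset_trans S'V (subsetDl _ _).
    rewrite /lift; case yS: (y \in S'); apply/misP; split.
    + by rewrite subUset sub1set xV.
    + move=> a b; rewrite !inE => /orP [/eqP ->|aS] /orP [/eqP ->|bS].
      * by rewrite eirr.
      * by rewrite eq_xy ?(subsetP S'V') // S'ind.
      * by rewrite esym eq_xy ?(subsetP S'V') // S'ind.
      * exact: S'ind.
    + move=> z zV; rewrite !inE negb_or => /andP [zx zS].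
      have [t tS ezt] := S'dom z (setD1I zV zx) zS.
      by exists t => //; rewrite !inE tS orbT.
    + by [].
    + exact: S'ind.
    + move=> z zV zS; case: (z =P x) => [->|/eqP zx].
        have [t tS eyt] := S'dom y (setD1I yV (eq_sym_neq xy)) (negbT yS).
        by exists t => //; rewrite eq_xy // (subsetP S'V').
      exact: S'dom (setD1I zV zx) zS.
rewrite card_in_imset // => A B; rewrite !inE => /misP [AV _ _] /misP [BV _ _].
have Ax : x \notin A by apply/negP => /(subsetP AV); rewrite !inE eqxx.
have Bx : x \notin B by apply/negP => /(subsetP BV); rewrite !inE eqxx.
rewrite /lift => eAB; apply/setP => z.
move/setP: eAB => /(_ z); case: (z =P x) => [->|/eqP zx]; first by rewrite (negbTE Ax) (negbTE Bx).
by case: (y \in A); case: (y \in B); rewrite ?inE ?(negbTE zx).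
Qed.


Hypothesis eacyc : acyclic e.

Lemma back_edge (x : T) q1 y q2 : uniq (x :: q1 ++ y :: q2) ->
  path e x (q1 ++ y :: q2) -> q1 != [::] -> e y x -> False.
Proof.
move=> U P q1n eyx.
have U' : uniq (x :: rcons q1 y).
  move: U; rewrite -cat_rcons /= mem_cat cat_uniq negb_or.
  by case/andP => /andP [-> _] /andP [-> _].
have P' : path e x (rcons q1 y) by move: P; rewrite -cat_rcons cat_path => /andP [].
have H3 : 3 <= size (x :: rcons q1 y) by rewrite /= size_rcons; case: q1 q1n {U U' P P'}.
move: (eacyc U' H3); by rewrite /= rcons_path P' /= last_rcons eyx.
Qed.

Definition vpath (V : {set T}) (p : seq T) :=
  [&& uniq p, all (fun x => x \in V) p & if p is x :: q then path e x q else true].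

Lemma longest (V : {set T}) : exists2 p, vpath V p & forall q, vpath V q -> size q <= size p.
Proof.
pose P := fun n => [exists t : n.-tuple T, vpath V t].
have P0 : exists n, P n by exists 0; apply/existsP; exists [tuple].
have Pb : forall n, P n -> n <= #|T|.
  move=> n /existsP [t /and3P [Ut _ _]].
  by rewrite -(size_tuple t) -(card_uniqP Ut) max_card.
case: (ex_maxnP P0 Pb) => m /existsP [t Ht] Hmax.
exists (val t) => // q Hq; rewrite size_tuple; apply: Hmax.
by apply/existsP; exists (in_tuple q).
Qed.

Lemma vpath_rev V p : vpath V p -> vpath V (rev p).
Proof.
case/and3P => U A P; apply/and3P; split; first by rewrite rev_uniq.
  by rewrite all_rev.
case: p U A P => // x q _ _ P.
rewrite lastI rev_rcons.
have -> : path e (last x q) (rev (belast x q)) = path (fun z => e^~ z) x q by rewrite rev_path.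
by rewrite (eq_path (e' := e)) // => a b; rewrite esym.
Qed.

Lemma vpath_behead V x q : vpath V (x :: q) -> vpath V q.
Proof.
case/and3P => /= /andP [_ U] /andP [_ A] P; apply/and3P; split => //.
by case: q P {U A} => //= y q /andP [].
Qed.

Lemma vpath_cons V x y q : vpath V (y :: q) -> x \in V -> x \notin (y :: q) -> e x y ->
  vpath V (x :: y :: q).
Proof.
case/and3P => U A P xV xn exy; apply/and3P; split => //=.
- by rewrite xn; exact: U.
- by rewrite xV.
- by rewrite exy.
Qed.

Lemma first_leaf V p a0 a1 q : p = a0 :: a1 :: q -> vpath V p ->
  (forall q, vpath V q -> size q <= size p) -> N V a0 = [set a1].
Proof.
move=> -> Hp Hmax; apply/setP => b; rewrite !inE.
case: (b =P a1) => [->|/eqP ba1].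
  by case/and3P: Hp => _ /= /and3P [_ -> _] /andP [-> _].
apply/negbTE/negP => /andP [bV eab].
case bp: (b \in a0 :: a1 :: q).
  move: bp; rewrite !inE (negbTE ba1) /=.
  case: (b =P a0) => [ba0|_]; first by rewrite ba0 eirr in eab.
  move=> bq; case/splitPr: bq Hp => q1 q2 /and3P [U _ P].
  apply: (back_edge (q1 := a1 :: q1) U P) => //; by rewrite esym.
have eba : e b a0 by rewrite esym.
by have := Hmax _ (vpath_cons Hp bV (negbT bp) eba); rewrite /= ltnn.
Qed.


Definition tf (V : {set T}) := forall x y, x \in V -> y \in V -> x != y -> N V x != N V y.

Lemma set1_or (A : {set T}) a : a \in A -> A = [set a] \/ exists2 c, c \in A & c != a.
Proof.
move=> aA; case: (boolP [exists c in A, c != a]) => [/existsP [c /andP [cA ca]]|H].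
  by right; exists c.
left; apply/setP => c; rewrite inE; apply/idP/eqP => [cA|-> //].
by apply/eqP/negPn; apply: contra H => ca; apply/existsP; exists c; rewrite cA.
Qed.

Lemma second_deg2 V a0 a1 a2 q : tf V -> vpath V (a0 :: a1 :: a2 :: q) ->
  (forall q', vpath V q' -> size q' <= size (a0 :: a1 :: a2 :: q)) ->
  N V a1 = [set a0; a2].
Proof.
move=> tfV Hp Hmax.
have Na0 := first_leaf (erefl _) Hp Hmax.
have /and3P [U A P] := Hp.
have a0V : a0 \in V by move: A => /= /andP [].
have a1V : a1 \in V by move: A => /= /and3P [].
apply/setP => b; rewrite !inE.
case: (b =P a0) => [->|/eqP ba0] /=.
  by rewrite a0V esym; move: P => /= /andP [].
case: (b =P a2) => [->|/eqP ba2] /=.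
  by move: A P => /= /and4P [_ _ -> _] /and3P [_ -> _].
apply/negbTE/negP => /andP [bV eab].
case bp: (b \in a0 :: a1 :: a2 :: q).
  move: bp; rewrite !inE (negbTE ba0) (negbTE ba2) /=.
  case: (b =P a1) => [ba1|_]; first by rewrite ba1 eirr in eab.
  move=> bq; have Hp' := vpath_behead Hp.
  case/splitPr: bq Hp' => q1 q2 /and3P [U' _ P'].
  apply: (back_edge (q1 := a2 :: q1) U' P') => //; by rewrite esym.
have a1Nb : a1 \in N V b by rewrite inE a1V esym.
case: (set1_or a1Nb) => [Nb|[c]].
  by move: (tfV _ _ bV a0V ba0); rewrite Nb Na0 eqxx.
rewrite inE => /andP [cV ebc] ca1.
have Hb : vpath V (b :: a1 :: a2 :: q).
  apply: vpath_cons (vpath_behead Hp) bV _ _; last by rewrite esym.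
  by apply: contra (negbT bp) => H; rewrite inE H orbT.
case cp: (c \in a0 :: a1 :: a2 :: q).
  move: cp; rewrite inE; case: (c =P a0) => [ca0|_] /=.
    have : b \in N V a0 by rewrite inE bV esym -ca0.
    by rewrite Na0 inE => /eqP ba1; move: bp; rewrite ba1 !inE eqxx orbT.
  rewrite inE (negbTE ca1) /= => cq.
  case/splitPr: cq Hb => q1 q2 /and3P [U' _ P'].
  by apply: (back_edge (q1 := a1 :: q1) U' P') => //; rewrite esym.
have Hc : vpath V (c :: b :: a1 :: a2 :: q).
  apply: vpath_cons Hb cV _ _; last by rewrite esym.
  have cq : c \notin a1 :: a2 :: q by apply: contra (negbT cp) => H; rewrite in_cons H orbT.
  rewrite in_cons negb_or cq andbT; apply/eqP => cb; by rewrite cb eirr in ebc.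
by have := Hmax _ Hc; rewrite /= ltnn.
Qed.


Lemma third_struct V a0 a1 a2 a3 q b : tf V -> vpath V (a0 :: a1 :: a2 :: a3 :: q) ->
  (forall q', vpath V q' -> size q' <= size (a0 :: a1 :: a2 :: a3 :: q)) ->
  b \in N V a2 -> b != a1 -> b != a3 ->
  N V b = [set a2] \/ exists c, N V b = [set a2; c] /\ N V c = [set b].
Proof.
move=> tfV Hp Hmax bN ba1 ba3.
set p := a0 :: a1 :: a2 :: a3 :: q in Hp Hmax.
have Na0 := first_leaf (erefl _) Hp Hmax.
have Na1 := second_deg2 tfV Hp Hmax.
have /and3P [U A P] := Hp.
move: (bN); rewrite inE => /andP [bV eab].
have a2V : a2 \in V by move: A => /= /and4P [].
have a2p : a2 \in p by rewrite !inE eqxx !orbT.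
have Hp2 : vpath V (a2 :: a3 :: q) by apply: vpath_behead (vpath_behead Hp).
have bp : b \notin p.
  rewrite /p !in_cons !negb_or ba1 ba3 /=; apply/andP; split.
    apply/eqP => ba0; have : a2 \in N V a0 by rewrite inE a2V -ba0 esym.
    rewrite Na0 inE => /eqP a21; move: U => /= /and3P [_ H _]; by rewrite a21 in_cons eqxx in H.
  apply/andP; split; first by apply/eqP => ba2; rewrite ba2 eirr in eab.
  apply/negP => bq; case/splitPr: bq Hp2 => q1 q2 /and3P [U' _ P'].
  by apply: (back_edge (q1 := a3 :: q1) U' P') => //; rewrite esym.
have Hb : vpath V (b :: a2 :: a3 :: q).
  apply: vpath_cons Hp2 bV _ _; last by rewrite esym.
  by apply: contra bp => H; rewrite /p !inE; move: H; rewrite !inE => ->; rewrite !orbT.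
have leafc : forall c, c \in N V b -> c != a2 -> N V c = [set b].
  move=> c; rewrite inE => /andP [cV ebc] ca2.
  have cb : c != b by apply/eqP => cb; rewrite cb eirr in ebc.
  have cp : c \notin p.
    rewrite /p in_cons negb_or; apply/andP; split.
      apply/eqP => ca0; have : b \in N V a0 by rewrite inE bV -ca0 esym.
      rewrite Na0 inE => /eqP ba1'; by rewrite ba1' eqxx in ba1.
    rewrite in_cons negb_or; apply/andP; split.
      apply/eqP => ca1; have : b \in N V a1 by rewrite inE bV -ca1 esym.
      rewrite Na1 !inE => /orP [/eqP ba0|/eqP ba2].
        by move: bp; rewrite /p ba0 inE eqxx.
      by rewrite ba2 eirr in eab.
    rewrite in_cons negb_or ca2 /=; apply/negP => cq.
    case/splitPr: cq Hb => q1 q2 /and3P [U' _ P'].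
    by apply: (back_edge (q1 := a2 :: q1) U' P') => //; rewrite esym.
  have Hc : vpath V (c :: b :: a2 :: a3 :: q).
    apply: vpath_cons Hb cV _ _; last by rewrite esym.
    rewrite in_cons negb_or cb /=; apply: contra cp; rewrite /p !inE => ->; by rewrite !orbT.
  have bNc : b \in N V c by rewrite inE bV esym.
  case: (set1_or bNc) => // -[d]; rewrite inE => /andP [dV ecd] db; exfalso.
  case: (boolP (d \in p)) => dp.
    move: dp; rewrite /p in_cons; case: (d =P a0) => [da0|_] /=.
      have : c \in N V a0 by rewrite inE cV -da0 esym.
      by rewrite Na0 inE => /eqP ca1; move: cp; rewrite /p ca1 !inE eqxx orbT.
    rewrite in_cons; case: (d =P a1) => [da1|_] /=.
      have : c \in N V a1 by rewrite inE cV -da1 esym.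
      rewrite Na1 !inE => /orP [/eqP ca0|/eqP ca2'].
        by move: cp; rewrite /p ca0 inE eqxx.
      by rewrite ca2' eqxx in ca2.
    rewrite in_cons; case: (d =P a2) => [da2|_] /=.
      have a2b : a2 != b by apply/eqP => H; move: bp; rewrite -H a2p.
      have a2c : a2 != c by apply/eqP => H; move: cp; rewrite -H a2p.
      have U3 : uniq [:: a2; b; c] by rewrite /= !inE negb_or a2b a2c eq_sym cb.
      have := eacyc U3 (isT : 3 <= 3); by rewrite /= eab ebc -da2 ecd.
    move=> dq; case/splitPr: dq Hc => q1 q2 /and3P [U' _ P'].
    by apply: (back_edge (q1 := b :: a2 :: q1) U' P') => //; rewrite esym.
  have Hd : vpath V (d :: c :: b :: a2 :: a3 :: q).
    apply: vpath_cons Hc dV _ _; last by rewrite esym.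
    have dc : d != c by apply/eqP => dc; rewrite dc eirr in ecd.
    have dq : d \notin a2 :: a3 :: q by apply: contra dp => H; rewrite /p 2!in_cons H !orbT.
    by rewrite !in_cons !negb_or dc db /=; move: dq; rewrite !in_cons !negb_or.
  by have := Hmax _ Hd; rewrite /= ltnn.
have a2Nb : a2 \in N V b by rewrite inE a2V esym.
case: (set1_or a2Nb) => [->|[c cN ca2]]; first by left.
right; exists c; split; last exact: leafc.
have Nc := leafc c cN ca2.
apply/setP => x; apply/idP/idP.
  move=> xN; rewrite !inE; case: (x =P a2) => [//|/eqP xa2] /=.
  case: (x =P c) => [//|/eqP xc]; exfalso.
  have Nx := leafc x xN xa2.
  move: xN cN; rewrite !inE => /andP [xV _] /andP [cV _].
  by move: (tfV _ _ xV cV xc); rewrite Nx Nc eqxx.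
move=> H; have : (x == a2) || (x == c) by move: H; rewrite !inE.
by case/orP => /eqP ->.
Qed.


Definition noiso (V : {set T}) := forall x, x \in V -> N V x != set0.
Definition c (V : {set T}) := #|[set N V x | x in V] :\ set0|.

Lemma c_le (V : {set T}) : c V <= #|V|.
Proof. by apply: leq_trans (leq_imset_card _ _); apply: subset_leq_card; apply: subsetDl. Qed.

Lemma c_lb (V A : {set T}) : A \subset V -> {in A &, injective (N V)} ->
  (forall x, x \in A -> N V x != set0) -> #|A| <= c V.
Proof.
move=> AV inj ne; rewrite -(card_in_imset inj); apply: subset_leq_card.
apply/subsetP => K /imsetP [x xA ->]; rewrite !inE ne //=.
by apply/imsetP; exists x => //; apply: (subsetP AV).
Qed.

Lemma NDE (V R : {set T}) x : N (V :\: R) x = N V x :\: R.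
Proof. by apply/setP => y; rewrite !inE andbA. Qed.

Lemma N_notadj (V R : {set T}) x : ~~ [exists r in R, e x r] -> N (V :\: R) x = N V x.
Proof.
move=> H; rewrite NDE; apply/setP => y; rewrite !inE.
case: (boolP (y \in R)) => //= yR; symmetry; apply/negbTE/negP => /andP [_ exy].
by move/negP: H; apply; apply/existsP; exists y; rewrite yR.
Qed.

Lemma card3_le (A B C : {set T}) : #|A :|: B :|: C| <= #|A| + #|B| + #|C|.
Proof.
have U2 : forall X Y : {set T}, #|X :|: Y| <= #|X| + #|Y| by move=> X Y; rewrite cardsU leq_subr.
by apply: leq_trans (U2 _ _) _; rewrite leq_add2r U2.
Qed.

Lemma cbound (V R B : {set T}) : tf V -> noiso V ->
  (forall x, x \in V -> x \notin R -> x \notin B -> [exists r in R, e x r] ->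
     N (V :\: R) x != set0 /\
     (forall y, y \in V -> y \notin R -> y \notin B -> y != x -> N (V :\: R) y != N (V :\: R) x)) ->
  #|V| <= c (V :\: R) + #|R| + #|B|.
Proof.
move=> tfV niV H.
set A := (V :\: R) :\: B.
have AV : forall x, x \in A -> [/\ x \in V, x \notin R & x \notin B].
  by move=> x; rewrite !inE => /andP [-> /andP [-> ->]].
have cA : #|A| <= c (V :\: R).
  apply: c_lb.
  - by apply: subsetDl.
  - move=> x y /AV [xV xR xB] /AV [yV yR yB] Nxy; apply/eqP/negPn/negP => xy.
    case: (boolP [exists r in R, e x r]) => [ax|nax].
      have [_ H2] := H x xV xR xB ax.
      by move: (H2 y yV yR yB (eq_sym_neq xy)); rewrite Nxy eqxx.
    case: (boolP [exists r in R, e y r]) => [ay|nay].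
      have [_ H2] := H y yV yR yB ay.
      by move: (H2 x xV xR xB xy); rewrite Nxy eqxx.
    by move: (tfV x y xV yV xy); rewrite -(N_notadj V nax) -(N_notadj V nay) Nxy eqxx.
  - move=> x /AV [xV xR xB].
    case: (boolP [exists r in R, e x r]) => [ax|nax]; first by case: (H x xV xR xB ax).
    by rewrite (N_notadj V nax) niV.
apply: leq_trans (leq_add (leq_add cA (leqnn #|R|)) (leqnn #|B|)).
apply: leq_trans (card3_le A R B); apply: subset_leq_card; apply/subsetP => x xV.
rewrite !inE xV; by case: (x \in R); case: (x \in B).
Qed.

Lemma iso_rm (V : {set T}) z : z \in V -> N V z = set0 -> im V = im (V :\ z).
Proof.
move=> zV Nz.
have -> : V :\ z = V :\: (z |: N V z) by rewrite Nz setU0.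
rewrite -card_contain // /im; apply: eq_card => S; rewrite !inE.
case M: (mis V S) => //=; symmetry; apply/negPn/negP => zS.
move/misP: M => [SV _ Sdom]; have [y yS ezy] := Sdom z zV zS.
have : y \in N V z by rewrite inE (subsetP SV _ yS).
by rewrite Nz inE.
Qed.

Lemma c_iso (V : {set T}) z : z \in V -> N V z = set0 -> c V <= c (V :\ z).
Proof.
move=> zV Nz; apply: subset_leq_card; apply/subsetP => K.
rewrite in_setD1 => /andP [K0 /imsetP [a aV Ka]].
rewrite in_setD1 K0 /= Ka; apply/imsetP; exists a.
  rewrite !inE aV andbT; apply/eqP => az; by move: K0; rewrite Ka az Nz eqxx.
apply/setP => y; rewrite !inE; case: (y =P z) => [->|_] //=.
apply/negbTE/negP => /andP [_ eaz].
have : a \in N V z by rewrite inE aV esym.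
by rewrite Nz inE.
Qed.

Lemma c_twin (V : {set T}) x y : x \in V -> y \in V -> x != y -> N V x = N V y ->
  c V <= c (V :\ x).
Proof.
move=> xV yV xy Nxy.
have tw : forall a, a \in V -> (x \in N V a) = (y \in N V a).
  move=> a aV; rewrite !inE xV yV /= esym [e a y]esym.
  by move/setP: Nxy => /(_ a); rewrite !inE aV.
set C := [set N V a | a in V] :\ set0.
have inC : forall K, K \in C -> exists2 a, a \in V & K = N V a.
  by move=> K; rewrite in_setD1 => /andP [_ /imsetP [a aV ->]]; exists a.
have xK : forall K, K \in C -> x \in K -> y \in K :\ x.
  by move=> K /inC [a aV ->] xK; rewrite in_setD1 eq_sym xy /= -tw.
have yK : forall K, K \in C -> y \in K -> x \in K.
  by move=> K /inC [a aV ->] yK; rewrite tw.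
have D1id : forall K : {set T}, x \notin K -> K :\ x = K.
  move=> K xK'; apply/setP => t; rewrite in_setD1; case: (t =P x) => //= ->.
  by rewrite (negbTE xK').
rewrite /c -/C -(card_in_imset (f := fun K => K :\ x)).
  apply: subset_leq_card; apply/subsetP => K' /imsetP [K KC ->].
  have K0 : K != set0 by move: (KC); rewrite /C in_setD1 => /andP [].
  case/inC: (KC) => a aV Ka.
  have [a' [a'V a'x Na']] : exists a', [/\ a' \in V, a' != x & N V a' = K].
    case: (a =P x) => [ax|/eqP ax]; last by exists a.
    by exists y; split => //; [rewrite eq_sym | rewrite Ka ax Nxy].
  rewrite in_setD1; apply/andP; split.
    apply/negP => /eqP K0'.
    case: (boolP (x \in K)) => xK'.
      by move: (xK K KC xK'); rewrite K0' inE.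
    by move: K0; rewrite -(D1id K xK') K0' eqxx.
  apply/imsetP; exists a'; first by rewrite in_setD1 a'x a'V.
  by rewrite NDE Na'.
move=> K1 K2 K1C K2C /= E; apply/setP => z.
case: (z =P x) => [->|/eqP zx]; last by move/setP: E => /(_ z); rewrite !in_setD1 zx.
apply/idP/idP => H.
  by move: (xK K1 K1C H); rewrite E => /setD1P [_ ] /(yK K2 K2C).
by move: (xK K2 K2C H); rewrite -E => /setD1P [_ ] /(yK K1 K1C).
Qed.


Lemma cyc4 x y a b : x != y -> a != b -> e x a -> e y a -> e x b -> e y b -> False.
Proof.
move=> xy ab exa eya exb eyb.
have xa : x != a by apply/eqP => H; rewrite H eirr in exa.
have xb : x != b by apply/eqP => H; rewrite H eirr in exb.
have ya : y != a by apply/eqP => H; rewrite H eirr in eya.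
have yb : y != b by apply/eqP => H; rewrite H eirr in eyb.
have U : uniq [:: x; a; y; b].
  by rewrite /= !inE !negb_or xa xy xb eq_sym ya ab yb.
have := eacyc U (isT : 3 <= 4).
by rewrite /= exa (esym a) eya eyb (esym b) exb.
Qed.

Lemma obl_two (V R B : {set T}) x a b : a \in N (V :\: R) x -> b \in N (V :\: R) x -> a != b ->
  N (V :\: R) x != set0 /\
  (forall y, y \in V -> y \notin R -> y \notin B -> y != x -> N (V :\: R) y != N (V :\: R) x).
Proof.
move=> aN bN ab; split; first by apply/set0Pn; exists a.
move=> y _ _ _ yx; apply/eqP => E.
move: (aN) (bN); rewrite -{1 2}E !inE => /andP [_ eya] /andP [_ eyb].
move: aN bN; rewrite !inE => /andP [_ exa] /andP [_ exb].
exact: (cyc4 yx ab eya exa eyb exb).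
Qed.

Lemma obl_leaf (V R B : {set T}) x t : t \in N (V :\: R) x -> N V t = [set x] ->
  N (V :\: R) x != set0 /\
  (forall y, y \in V -> y \notin R -> y \notin B -> y != x -> N (V :\: R) y != N (V :\: R) x).
Proof.
move=> tN Nt; split; first by apply/set0Pn; exists t.
move=> y yV _ _ yx; apply/eqP => E.
move: (tN); rewrite -E !inE => /andP [_ eyt].
have : y \in N V t by rewrite inE yV esym.
by rewrite Nt inE (negbTE yx).
Qed.

Lemma cardU1le (a : T) (A : {set T}) : #|a |: A| <= #|A|.+1.
Proof. by rewrite cardsU1; case: (a \notin A). Qed.

Lemma cardU_le (A B : {set T}) : #|A :|: B| <= #|A| + #|B|.
Proof. by rewrite cardsU leq_subr. Qed.

Lemma card2le (a b : T) : #|[set a; b]| <= 2.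
Proof. by apply: leq_trans (cardU1le _ _) _; rewrite cards1. Qed.

Lemma card3le (a b d : T) : #|a |: [set b; d]| <= 3.
Proof. by apply: leq_trans (cardU1le _ _) _; rewrite ltnS card2le. Qed.

Lemma setD_lt (V R : {set T}) r : r \in V -> r \in R -> #|V :\: R| < #|V|.
Proof.
move=> rV rR; apply: proper_card; rewrite properEneq subsetDl andbT.
by apply/eqP => E; move: rV; rewrite -E !inE rR.
Qed.


Section Core.
Variables (V : {set T}) (u v w pp : T).
Hypothesis tfV : tf V.
Hypothesis niV : noiso V.
Hypothesis IH : forall W : {set T}, #|W| < #|V| -> g (c W) <= im W.
Hypothesis n4 : 4 <= #|V|.
Hypotheses (uV : u \in V) (vV : v \in V) (wV : w \in V) (pV : pp \in V).
Hypothesis Hu : N V u = [set v].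
Hypothesis Hv : N V v = [set u; w].
Hypothesis ewp : e w pp.
Hypotheses (uv : u != v) (uw : u != w) (up : u != pp) (vw : v != w) (vp : v != pp) (wp : w != pp).
Hypothesis F3 : forall b, b \in N V w -> b != v -> b != pp ->
  N V b = [set w] \/ exists c, N V b = [set w; c] /\ N V c = [set b].

Definition Obl (R B : {set T}) x := N (V :\: R) x != set0 /\
  (forall y, y \in V -> y \notin R -> y \notin B -> y != x -> N (V :\: R) y != N (V :\: R) x).

Lemma glue (R : {set T}) k r : r \in V -> r \in R -> #|V| <= c (V :\: R) + k ->
  g (#|V| - k) <= im (V :\: R).
Proof.
move=> rV rR H; apply: leq_trans (IH (setD_lt rV rR)).
by apply: g_mono; rewrite leq_subLR addnC.
Qed.

Lemma NVP x y : (y \in N V x) = (y \in V) && e x y.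
Proof. by rewrite inE. Qed.

Lemma inNV x y : y \in V -> e x y -> y \in N V x.
Proof. by rewrite NVP => -> ->. Qed.

Lemma NV_V x y : y \in N V x -> y \in V.
Proof. by rewrite NVP => /andP []. Qed.

Lemma NV_e x y : y \in N V x -> e x y.
Proof. by rewrite NVP => /andP []. Qed.

Lemma adj_u x : x \in V -> e x u -> x = v.
Proof.
move=> xV exu; have : x \in N V u by rewrite inNV // esym.
by rewrite Hu inE => /eqP.
Qed.

Lemma adj_v x : x \in V -> e x v -> x = u \/ x = w.
Proof.
move=> xV exv; have : x \in N V v by rewrite inNV // esym.
by rewrite Hv !inE => /orP [/eqP ->|/eqP ->]; [left|right].
Qed.

Lemma euv : e u v.
Proof. by apply: (@NV_e u v); rewrite Hu set11. Qed.

Lemma evw : e v w.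
Proof. by apply: (@NV_e v w); rewrite Hv !inE eqxx orbT. Qed.

Lemma u_notNw : u \notin N V w.
Proof.
apply/negP => /NV_e ewu; have wv := adj_u wV ewu.
by move: vw; rewrite wv eqxx.
Qed.

Lemma p_notNu : pp \notin N V u.
Proof. by rewrite Hu inE eq_sym vp. Qed.

Lemma p_notNv : pp \notin N V v.
Proof. by rewrite Hv !inE negb_or eq_sym up eq_sym wp. Qed.

Definition R1 := u |: [set v].
Definition R2 := v |: [set u; w].
Definition W1 := V :\: R1.
Definition W2 := V :\: R2.

Lemma split_uv : im V = im W1 + im W2.
Proof. by rewrite (leaf_split uV Hu) Hu Hv. Qed.

Lemma R1adj x : x \in V -> x \notin R1 -> [exists r in R1, e x r] -> x = w.
Proof.
move=> xV xR /existsP [r /andP [rR exr]]; move: rR; rewrite !inE => /orP [/eqP ru|/eqP rv].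
  by subst r; move: xR; rewrite (adj_u xV exr) !inE eqxx orbT.
subst r; case: (adj_v xV exr) => // xu.
by move: xR; rewrite xu !inE eqxx.
Qed.


Lemma R2adj x : x \in V -> x \notin R2 -> [exists r in R2, e x r] -> x \in N V w /\ x != v.
Proof.
move=> xV xR /existsP [r /andP [rR exr]].
have xv : x != v by apply: contraNneq xR => ->; rewrite !inE eqxx.
move: rR; rewrite !inE => /orP [/eqP rv|/orP [/eqP ru|/eqP rw]]; subst r.
- by case: (adj_v xV exr) => xe; move: xR; rewrite xe !inE eqxx ?orbT.
- by rewrite (adj_u xV exr) eqxx in xv.
- by split => //; rewrite xV /= esym.
Qed.

Lemma bnd1 (B : {set T}) k : #|B| <= k -> (w \notin B -> Obl R1 B w) ->
  g (#|V| - (2 + k)) <= im W1.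
Proof.
move=> Bk Hw; apply: (@glue R1 _ u) => //; first by rewrite !inE eqxx.
apply: leq_trans (cbound tfV niV _) _.
  move=> x xV xR xB ax; have xw := R1adj xV xR ax; subst x; exact: Hw.
by rewrite -addnA leq_add2l; apply: leq_add => //; apply: card2le.
Qed.

Lemma bnd2 (B : {set T}) k : #|B| <= k ->
  (forall x, x \in N V w -> x != v -> x \notin R2 -> x \notin B -> Obl R2 B x) ->
  g (#|V| - (3 + k)) <= im W2.
Proof.
move=> Bk Hx; apply: (@glue R2 _ u) => //; first by rewrite !inE eqxx orbT.
apply: leq_trans (cbound tfV niV _) _.
  move=> x xV xR xB ax; have [xN xv] := R2adj xV xR ax; exact: Hx.
by rewrite -addnA leq_add2l; apply: leq_add => //; apply: card3le.
Qed.

Lemma head_facts x c : x \in N V w -> x != v -> N V x = [set w; c] -> N V c = [set x] ->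
  [/\ c \in V, c != u, c != v, c != w & c != pp].
Proof.
move=> xN xv Nx Nc.
have cV : c \in V by apply: (@NV_V x); rewrite Nx !inE eqxx orbT.
split => //.
- apply/eqP => cu; move: Nc; rewrite cu Hu => /setP /(_ v); rewrite !inE eqxx eq_sym.
  by rewrite (negbTE xv).
- apply/eqP => cv; move: Nc; rewrite cv Hv => /setP E.
  have : u \in [set x] by rewrite -E !inE eqxx.
  have : w \in [set x] by rewrite -E !inE eqxx orbT.
  rewrite !inE => /eqP wx /eqP ux.
  by move: uw; rewrite ux wx eqxx.
- apply/eqP => cw; move: Nc; rewrite cw => /setP E.
  have : v \in [set x] by rewrite -E NVP vV esym evw.
  by rewrite inE => /eqP vx; rewrite vx eqxx in xv.
- apply/eqP => cp; move: Nc; rewrite cp => /setP E.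
  have : w \in [set x] by rewrite -E NVP wV esym ewp.
  rewrite inE => /eqP wx; move: xN; rewrite -wx NVP eirr; by rewrite andbF.
Qed.

Lemma head_obl (R B : {set T}) x c : x \in N V w -> x != v -> N V x = [set w; c] -> N V c = [set x] ->
  c \notin R -> Obl R B x.
Proof.
move=> xN xv Nx Nc cR; apply: (@obl_leaf V R B x c) => //.
by rewrite NDE in_setD cR Nx !inE eqxx orbT.
Qed.

Lemma caseII : (forall l, l \in V -> N V l = [set w] -> l = pp) ->
  forall x c, x \in N V w -> x != v -> x != pp -> N V x = [set w; c] -> N V c = [set x] ->
  g #|V| <= im V.
Proof.
move=> noleaf x c xN xv xp Nx Nc.
rewrite split_uv; apply: leq_trans (ineqE1 #|V|) _; apply: leq_add.
  apply: (@bnd1 set0 0); first by rewrite cards0.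
  move=> _; apply: (@obl_two V R1 set0 w x pp).
  - rewrite NDE in_setD xN andbT !inE negb_or xv andbT.
    by apply: contraNneq u_notNw => <-.
  - by rewrite NDE in_setD inNV // andbT !inE negb_or eq_sym up eq_sym vp.
  - exact: xp.
apply: (@bnd2 [set pp] 1); first by rewrite cards1.
move=> y yN yv yR yB; rewrite inE in yB.
case: (F3 yN yv yB) => [Ny|[c' [Ny Nc']]].
  by move: (noleaf y (NV_V yN) Ny) => yp; rewrite yp eqxx in yB.
have [_ c'u c'v c'w _] := head_facts yN yv Ny Nc'.
apply: (@head_obl R2 [set pp] y c' yN yv Ny Nc'); by rewrite !inE !negb_or c'u c'v c'w.
Qed.


Lemma pin_w : pp \in N V w.
Proof. by rewrite NVP pV ewp. Qed.

Lemma caseIII : (forall x, x \in N V w -> x = v \/ x = pp) -> g #|V| <= im V.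
Proof.
move=> Nw.
case: (boolP [exists q in V, (N V q == [set pp]) && (q != w)]) => [/existsP [q /and3P [qV /eqP Nq qw]]|noq].
  rewrite split_uv; apply: leq_trans (ineqE3 n4) _; rewrite mul2n -addnn; apply: leq_add.
    apply: (@bnd1 [set w] 1); first by rewrite cards1.
    by rewrite inE eqxx.
  apply: (@bnd2 set0 0); first by rewrite cards0.
  move=> x xN xv xR _; case: (Nw x xN) => [xv'|->]; first by rewrite xv' eqxx in xv.
  apply: (@obl_leaf V R2 set0 pp q) => //.
  have epq : e pp q.
    have : pp \in N V q by rewrite Nq set11.
    by rewrite NVP esym => /andP [].
  rewrite NDE in_setD NVP qV epq andbT.
  have qv : q != v.
    apply/eqP => qv; have : u \in [set pp] by rewrite -Nq qv Hv !inE eqxx.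
    by rewrite inE => /eqP up'; move: up; rewrite up' eqxx.
  have qu : q != u.
    apply/eqP => qu; have : v \in [set pp] by rewrite -Nq qu Hu !inE eqxx.
    by rewrite inE => /eqP vp'; move: vp; rewrite vp' eqxx.
  by rewrite !inE !negb_or qv qu qw.
rewrite split_uv; apply: leq_trans (ineqE1 #|V|) _; apply: leq_add.
  apply: (@bnd1 set0 0); first by rewrite cards0.
  move=> _.
  have NW1w : N (V :\: R1) w = [set pp].
    apply/setP => t; rewrite NDE in_setD inE; apply/idP/idP.
      case/andP => tR tN; case: (Nw t tN) => [tv|->//].
      by move: tR; rewrite tv !inE eqxx orbT.
    move/eqP => ->; rewrite pin_w andbT !inE negb_or eq_sym up eq_sym vp.
    by [].
  split; first by rewrite NW1w; apply/set0Pn; exists pp; rewrite set11.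
  move=> y yV yR _ yw; apply/eqP => E.
  case: (boolP [exists r in R1, e y r]) => [ay|nay].
    by rewrite (R1adj yV yR ay) eqxx in yw.
  move/negP: noq; apply; apply/existsP; exists y.
  by rewrite yV yw -(N_notadj V nay) E NW1w eqxx.
apply: (@bnd2 [set pp] 1); first by rewrite cards1.
move=> x xN xv _ xB; case: (Nw x xN) => [xv'|xp]; first by rewrite xv' eqxx in xv.
by rewrite xp inE eqxx in xB.
Qed.


Lemma Nsym x y : x \in V -> y \in V -> (x \in N V y) = (y \in N V x).
Proof. by move=> xV yV; rewrite !NVP xV yV esym. Qed.

Lemma exU (A B : {set T}) y : [exists r in A :|: B, e y r] ->
  [exists r in A, e y r] \/ [exists r in B, e y r].
Proof.
move=> /existsP [r /andP [rAB eyr]]; move: rAB; rewrite inE => /orP [rA|rB].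
  by left; apply/existsP; exists r; rewrite rA.
by right; apply/existsP; exists r; rewrite rB.
Qed.

Lemma ex2 (a b : T) y : [exists r in [set a; b], e y r] -> e y a \/ e y b.
Proof.
by move=> /existsP [r /andP [rR eyr]]; move: rR; rewrite !inE => /orP [/eqP <-|/eqP <-]; [left|right].
Qed.

Lemma ex1 (a : T) y : [exists r in [set a], e y r] -> e y a.
Proof. by move=> /existsP [r /andP [rR eyr]]; move: rR; rewrite !inE => /eqP <-. Qed.

Lemma set1_inj (a b : T) : [set a] = [set b] -> a = b.
Proof. by move/setP => /(_ a); rewrite !inE eqxx => H; apply/eqP; rewrite -H. Qed.

Section CaseI.
Variable l : T.
Hypotheses (lV : l \in V) (Nl : N V l = [set w]) (lp : l != pp).

Lemma lN : l \in N V w.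
Proof. by rewrite Nsym // Nl set11. Qed.

Lemma lu : l != u.
Proof. by apply/eqP => lu'; move: Nl; rewrite lu' Hu => /set1_inj vw'; move: vw; rewrite vw' eqxx. Qed.

Lemma lv : l != v.
Proof.
apply/eqP => lv'; have : u \in [set w] by rewrite -Nl lv' Hv set21.
by rewrite inE (negbTE uw).
Qed.

Lemma lw : l != w.
Proof. by apply/eqP => lw'; move: lN; rewrite lw' NVP eirr andbF. Qed.

Lemma notleaf_w x : x \in V -> N V x = [set w] -> x = l.
Proof.
move=> xV Nx; apply/eqP/negPn/negP => xl.
by move: (tfV xV lV xl); rewrite Nx Nl eqxx.
Qed.

Lemma caseI_T1 : g (#|V| - 2) <= im W1.
Proof.
apply: (@bnd1 set0 0); first by rewrite cards0.
move=> _; apply: (@obl_leaf V R1 set0 w l) => //.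
by rewrite NDE in_setD lN andbT !inE negb_or lu lv.
Qed.

Lemma head_or x : x \in N V w -> x != v -> x != pp -> x != l ->
  exists c, N V x = [set w; c] /\ N V c = [set x].
Proof.
move=> xN xv xp xl; case: (F3 xN xv xp) => // Nx.
by rewrite (notleaf_w (NV_V xN) Nx) eqxx in xl.
Qed.

Lemma caseIa : ~~ [exists z, exists lz, [&& lz \in V, N V pp == [set w; z], N V lz == [set z] & lz != pp]] ->
  g #|V| <= im V.
Proof.
move=> notr.
rewrite split_uv; apply: leq_trans (ineqE1 #|V|) _; apply: leq_add; first exact: caseI_T1.
apply: (@bnd2 [set l] 1); first by rewrite cards1.
move=> x xN xv xR xB; rewrite inE in xB.
case: (x =P pp) => [->|/eqP xp]; last first.
  have [c' [Nx Nc']] := head_or xN xv xp xB.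
  have [_ c'u c'v c'w _] := head_facts xN xv Nx Nc'.
  by apply: (@head_obl R2 [set l] x c' xN xv Nx Nc'); rewrite !inE !negb_or c'u c'v c'w.
have wNp : w \in N V pp by rewrite Nsym // pin_w.
have [z zN zw] : exists2 z, z \in N V pp & z != w.
  case: (set1_or wNp) => [Np|[z zN zw]]; last by exists z.
  by move: (tfV pV lV (eq_sym_neq lp)); rewrite Np Nl eqxx.
have zV := NV_V zN.
have zu : z != u by apply/eqP => zu'; move: p_notNu; rewrite -zu' Nsym // zN.
have zv : z != v by apply/eqP => zv'; move: p_notNv; rewrite -zv' Nsym // zN.
have zR : z \notin R2 by rewrite !inE !negb_or zv zu zw.
have zN2 : z \in N (V :\: R2) pp by rewrite NDE in_setD zR zN.
case: (set1_or zN2) => [N2p|[z' z'N z'z]]; last exact: (@obl_two V R2 [set l] pp z' z).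
split; first by apply/set0Pn; exists z.
move=> y yV yR yB yp; apply/eqP => E.
have Np : N V pp = [set w; z].
  apply/setP => t; rewrite !inE; apply/idP/idP.
    move=> tN; case: (boolP (t \in R2)) => tR.
      move: tR; rewrite !inE => /orP [/eqP tv|/orP [/eqP tu|->//]].
        by move: p_notNv; rewrite Nsym // -tv NVP tN.
      by move: p_notNu; rewrite Nsym // -tu NVP tN.
    have : t \in N (V :\: R2) pp by rewrite NDE in_setD tR NVP tN.
    by rewrite N2p inE => ->; rewrite orbT.
  by case/orP => /eqP ->; [rewrite -NVP | rewrite -NVP].
case: (boolP [exists r in R2, e y r]) => [ay|nay].
  have [yN yv] := R2adj yV yR ay.
  rewrite inE in yB.
  have [c' [Ny Nc']] := head_or yN yv yp yB.
  have [_ c'u c'v c'w _] := head_facts yN yv Ny Nc'.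
  have : c' \in N (V :\: R2) y by rewrite NDE in_setD Ny !inE !negb_or c'u c'v c'w eqxx orbT.
  rewrite E N2p inE => /eqP c'z.
  have : pp \in N V c' by rewrite c'z Nsym // zN.
  by rewrite Nc' inE (negbTE (eq_sym_neq yp)).
move/negP: notr; apply; apply/existsP; exists z; apply/existsP; exists y.
by rewrite yV Np -(N_notadj V nay) E N2p !eqxx yp.
Qed.


Lemma caseIb1 x c : x \in N V w -> x != v -> x != pp -> x != l ->
  N V x = [set w; c] -> N V c = [set x] -> g #|V| <= im V.
Proof.
move=> xN xv xp xl Nx Nc.
have [cV cu cv cw cp] := head_facts xN xv Nx Nc.
have xV := NV_V xN.
have xu : x != u by apply: contraNneq u_notNw => <-.
have xw : x != w by apply/eqP => E; move: xN; rewrite E NVP eirr andbF.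
have xR2 : x \notin R2 by rewrite !inE !negb_or xv xu xw.
have cR2 : c \notin R2 by rewrite !inE !negb_or cv cu cw.
have cW2 : c \in W2 by rewrite /W2 in_setD cR2 cV.
have NW2c : N W2 c = [set x].
  apply/setP => t; rewrite /W2 NDE in_setD Nc !in_set1.
  by case: (t =P x) => [->|_]; [rewrite xR2 | rewrite andbF].
have NW2x : N W2 x = [set c].
  apply/setP => t; rewrite /W2 NDE in_setD Nx !inE.
  case: (t =P c) => [->|_]; first by rewrite !negb_or cv cu cw orbT.
  by rewrite orbF; case: (t =P w) => [->|_]; [rewrite !orbT | rewrite andbF].
have S2 := leaf_split cW2 NW2c.
have E : x |: N W2 x = c |: [set x] by rewrite NW2x; apply/setP => t; rewrite !inE orbC.
rewrite NW2c E /W2 !setDDl in S2.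
set R3 := R2 :|: (c |: [set x]) in S2.
have B3 : g (#|V| - 7) <= im (V :\: R3).
  apply: (@glue R3 7 u) => //; first by rewrite /R3 !inE eqxx !orbT.
  apply: leq_trans (@cbound V R3 [set l; pp] tfV niV _) _.
    move=> y yV yR yB ay.
    have yR2 : y \notin R2 by apply: contra yR => H; rewrite /R3 in_setU H.
    have yc : y != c by apply: contra yR => /eqP ->; rewrite /R3 !inE eqxx !orbT.
    have yx : y != x by apply: contra yR => /eqP ->; rewrite /R3 !inE eqxx !orbT.
    have yl : y != l by apply: contra yB => /eqP ->; rewrite !inE eqxx.
    have yp : y != pp by apply: contra yB => /eqP ->; rewrite !inE eqxx orbT.
    case: (exU ay) => [a2|/ex2 [eyc|eyx]].
    - have [yN yv] := R2adj yV yR2 a2.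
      have [c' [Ny Nc']] := head_or yN yv yp yl.
      have [_ c'u c'v c'w _] := head_facts yN yv Ny Nc'.
      apply: (@head_obl R3 [set l; pp] y c' yN yv Ny Nc').
      have c'c : c' != c.
        by apply/eqP => E'; move: Nc'; rewrite E' Nc => /set1_inj xy; rewrite xy eqxx in yx.
      have c'x : c' != x.
        apply/eqP => E'; have : w \in [set y] by rewrite -Nc' E' Nx set21.
        by rewrite inE => /eqP wy; move: yR2; rewrite -wy !inE eqxx !orbT.
      by rewrite /R3 !inE !negb_or c'u c'v c'w c'c c'x.
    - have : y \in N V c by rewrite NVP yV esym.
      by rewrite Nc inE (negbTE yx).
    - have : y \in N V x by rewrite NVP yV esym.
      rewrite Nx !inE (negbTE yc) orbF => /eqP yw.
      by move: yR2; rewrite yw !inE eqxx !orbT.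
  have HR : #|R3| <= 5 := leq_trans (cardU_le _ _) (leq_add (card3le _ _ _) (card2le _ _)).
  have HB : #|[set l; pp]| <= 2 := card2le _ _.
  rewrite -addnA leq_add2l.
  by apply: leq_trans (leq_add HR HB) _.
rewrite split_uv S2; apply: leq_trans (ineqE5 _) _; apply: leq_add; first exact: caseI_T1.
by rewrite mul2n -addnn; apply: leq_add.
Qed.

Section Trouble.
Variables z lz : T.
Hypotheses (lzV : lz \in V) (Np : N V pp = [set w; z]) (Nlz : N V lz = [set z]) (lzp : lz != pp).

Lemma zw : z != w.
Proof.
apply/eqP => zw'; move: (tfV pV lV (eq_sym_neq lp)); rewrite Np Nl zw'.
by rewrite setUid eqxx.
Qed.

Lemma zN : z \in N V pp.
Proof. by rewrite Np !inE eqxx orbT. Qed.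

Lemma zV : z \in V.
Proof. exact: NV_V zN. Qed.

Lemma zu : z != u.
Proof. by apply/eqP => zu'; move: p_notNu; rewrite -zu' Nsym ?zV // zN. Qed.

Lemma zv : z != v.
Proof. by apply/eqP => zv'; move: p_notNv; rewrite -zv' Nsym ?zV // zN. Qed.

Lemma zl : z != l.
Proof.
apply/eqP => zl'; have : pp \in N V l by rewrite -zl' Nsym ?zV // zN.
by rewrite Nl inE eq_sym (negbTE wp).
Qed.

Lemma zp : z != pp.
Proof. by apply/eqP => zp'; move: zN; rewrite zp' NVP eirr andbF. Qed.

Lemma lzN : lz \in N V z.
Proof. by rewrite Nsym ?zV // Nlz set11. Qed.

Lemma lz_facts : [/\ lz != u, lz != v, lz != w & lz != l].
Proof.
split.
- by apply/eqP => E; move: Nlz; rewrite E Hu => /set1_inj vz; move: zv; rewrite vz eqxx.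
- apply/eqP => E; have : u \in [set z] by rewrite -Nlz E Hv set21.
  have : w \in [set z] by rewrite -Nlz E Hv !inE eqxx orbT.
  by rewrite !inE => /eqP wz /eqP uz; move: uw; rewrite wz uz eqxx.
- apply/eqP => E; have : v \in [set z] by rewrite -Nlz E Nsym // Hv !inE eqxx orbT.
  by rewrite inE eq_sym (negbTE zv).
- by apply/eqP => E; move: Nlz; rewrite E Nl => /set1_inj wz; move: zw; rewrite wz eqxx.
Qed.

Lemma caseIb2 : (forall x, x \in N V w -> [|| x == v, x == pp | x == l]) -> g #|V| <= im V.
Proof.
move=> Nw.
have NW1l : N W1 l = [set w].
  apply/setP => t; rewrite /W1 NDE in_setD Nl !inE; case: (t =P w) => [->|_]; last by rewrite andbF.
  by rewrite negb_or eq_sym uw eq_sym vw.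
have NW1w : N W1 w = [set l; pp].
  apply/setP => t; rewrite /W1 NDE in_setD; apply/idP/idP.
    case/andP => tR /Nw; rewrite !inE; case/or3P => [/eqP tv|->|->]; rewrite ?orbT //.
    by move: tR; rewrite tv !inE eqxx orbT.
  move=> H; have : (t == l) || (t == pp) by move: H; rewrite !inE.
  case/orP => /eqP ->.
    by rewrite lN !inE negb_or lu lv.
  by rewrite pin_w !inE negb_or eq_sym up eq_sym vp.
have lW1 : l \in W1 by rewrite /W1 in_setD lV !inE negb_or lu lv.
have S1 := leaf_split lW1 NW1l; rewrite NW1l NW1w /W1 !setDDl in S1.
set R4 := R1 :|: (l |: [set w]) in S1.
set R5 := R1 :|: (w |: [set l; pp]) in S1.
have [lzu lzv lzw lzl] := lz_facts.
have B4 : g (#|V| - 5) <= im (V :\: R4).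
  apply: (@glue R4 5 u) => //; first by rewrite !inE eqxx.
  apply: leq_trans (@cbound V R4 [set pp] tfV niV _) _.
    move=> x xV xR xB ax; exfalso.
    have xR1 : x \notin R1 by apply: contra xR => H; rewrite /R4 in_setU H.
    have [xl xw] : x != l /\ x != w by move: xR; rewrite !inE !negb_or => /and3P [_ -> ->].
    case: (exU ax) => [a1|/ex2 [exl|exw]].
    - by rewrite (R1adj xV xR1 a1) eqxx in xw.
    - have : x \in N V l by rewrite Nsym // NVP lV exl.
      by rewrite Nl inE (negbTE xw).
    - have xp : x != pp by move: xB; rewrite inE.
      have : x \in N V w by rewrite NVP xV esym.
      move/Nw; rewrite (negbTE xp) (negbTE xl) !orbF => /eqP xv.
      by move: xR1; rewrite xv !inE eqxx orbT.
  have HR : #|R4| <= 4 := leq_trans (cardU_le _ _) (leq_add (card2le _ _) (card2le _ _)).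
  by rewrite cards1 -addnA leq_add2l addn1 ltnS.
have zR5 : z \notin R5.
  rewrite /R5 !inE !negb_or zu zv zw zl zp.
  by [].
have lzR5 : lz \notin R5.
  by rewrite /R5 !inE !negb_or lzu lzv lzw lzl lzp.
have zW5 : z \in V :\: R5 by rewrite in_setD zR5 zV.
have lzW5 : lz \in V :\: R5 by rewrite in_setD lzR5 lzV.
have lzN5 : lz \in N (V :\: R5) z by rewrite NDE in_setD lzR5 lzN.
have B5a : #|V| <= c (V :\: R5) + 5.
  apply: leq_trans (@cbound V R5 set0 tfV niV _) _.
    move=> x xV xR _ ax.
    have xR1 : x \notin R1 by apply: contra xR => H; rewrite /R5 in_setU H.
    have xw : x != w by apply: contra xR => /eqP ->; rewrite /R5 !inE eqxx !orbT.
    have xl : x != l by apply: contra xR => /eqP ->; rewrite /R5 !inE eqxx !orbT.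
    have xp : x != pp by apply: contra xR => /eqP ->; rewrite /R5 !inE eqxx !orbT.
    case: (exU ax) => [a1|/exU [/ex1 exw|/ex2 [exl|exp]]].
    - by rewrite (R1adj xV xR1 a1) eqxx in xw.
    - have : x \in N V w by rewrite NVP xV esym.
      move/Nw; rewrite (negbTE xp) (negbTE xl) !orbF => /eqP xv.
      by move: xR1; rewrite xv !inE eqxx orbT.
    - have : x \in N V l by rewrite Nsym // NVP lV exl.
      by rewrite Nl inE (negbTE xw).
    - have : x \in N V pp by rewrite Nsym // NVP pV exp.
      rewrite Np !inE (negbTE xw) /= => /eqP xz; subst x.
      exact: (@obl_leaf V R5 set0 z lz).
  have HR : #|R5| <= 5 := leq_trans (cardU_le _ _) (leq_add (card2le _ _) (card3le _ _ _)).
  by rewrite cards0 addn0 leq_add2l.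
have c2 : 2 <= c (V :\: R5).
  have zlz : z != lz by apply/eqP => E; move: lzN; rewrite -E NVP eirr andbF.
  have <- : #|[set z; lz]| = 2 by rewrite cards2 zlz.
  apply: c_lb.
  - by apply/subsetP => t /set2P [->|->].
  - move=> a b /set2P [->|->] /set2P [->|->] // E.
      by move: lzN5; rewrite E !inE eirr !andbF.
    by move: lzN5; rewrite -E !inE eirr !andbF.
  - move=> t /set2P [->|->]; apply/set0Pn.
      by exists lz.
    by exists z; rewrite NDE in_setD zR5 Nlz set11.
have B5 : g (maxn (#|V| - 5) 2) <= im (V :\: R5).
  apply: leq_trans (IH (@setD_lt V R5 u uV _)); last by rewrite /R5 !inE eqxx.
  apply: g_mono; rewrite geq_max c2 andbT leq_subLR addnC; exact: B5a.
have B2 : g (#|V| - 5) <= im W2.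
  apply: (@bnd2 [set l; pp] 2); first exact: card2le.
  move=> x xN xv _ xB; exfalso; move: xB; rewrite !inE negb_or.
  by move: (Nw x xN); rewrite (negbTE xv) /= => /orP [->|->]; rewrite ?andbF.
rewrite split_uv S1; apply: leq_trans (ineqE4 _) _.
rewrite mul2n -addnn [X in _ <= X]addnAC.
by apply: leq_add => //; apply: leq_add.
Qed.

End Trouble.

Lemma caseI : g #|V| <= im V.
Proof.
case: (boolP [exists z, exists lz, [&& lz \in V, N V pp == [set w; z], N V lz == [set z] & lz != pp]]);
  last exact: caseIa.
move=> /existsP [z /existsP [lz /and4P [lzV /eqP Np /eqP Nlz lzp]]].
case: (boolP [exists x, [&& x \in N V w, x != v, x != pp & x != l]]).
  move=> /existsP [x /and4P [xN xv xp xl]].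
  have [c' [Nx Nc']] := head_or xN xv xp xl.
  exact: (caseIb1 xN xv xp xl Nx Nc').
move=> nohead; apply: (caseIb2 lzV Np Nlz lzp) => x xN.
case: (x =P v) => //= /eqP xv; case: (x =P pp) => //= /eqP xp.
apply/negPn/negP => xl; move/negP: nohead; apply; apply/existsP; exists x.
by rewrite xN xv xp xl.
Qed.

End CaseI.

Lemma main_case : g #|V| <= im V.
Proof.
case: (boolP [exists l, [&& l \in V, N V l == [set w] & l != pp]]).
  by move=> /existsP [l /and3P [lV /eqP Nl lp]]; exact: (caseI lV Nl lp).
move=> noleaf.
have noleaf' : forall l, l \in V -> N V l = [set w] -> l = pp.
  move=> l lV Nl; apply/eqP/negPn/negP => lp; move/negP: noleaf; apply.
  by apply/existsP; exists l; rewrite lV Nl eqxx lp.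
case: (boolP [exists x, [&& x \in N V w, x != v & x != pp]]).
  move=> /existsP [x /and3P [xN xv xp]].
  case: (F3 xN xv xp) => [Nx|[c' [Nx Nc']]].
    by move: (noleaf' x (NV_V xN) Nx) => E; rewrite E eqxx in xp.
  exact: (caseII noleaf' xN xv xp Nx Nc').
move=> nohead; apply: caseIII => x xN.
case: (x =P v) => [->|/eqP xv]; first by left.
case: (x =P pp) => [->|/eqP xp]; first by right.
by move/negP: nohead; case; apply/existsP; exists x; rewrite xN xv xp.
Qed.

End Core.


Lemma vpath_size (V : {set T}) p : vpath V p -> size p <= #|V|.
Proof.
case/and3P => U A _; rewrite -(card_uniqP U); apply: subset_leq_card.
by apply/subsetP => x xp; move/allP: A => /(_ x xp).
Qed.

Lemma uniq_neq (x y : T) s : uniq (x :: s) -> y \in s -> x != y.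
Proof. by move=> /andP [xs _] ys; apply: contraNneq xs => ->. Qed.

Lemma core (V : {set T}) : tf V -> noiso V ->
  (forall W : {set T}, #|W| < #|V| -> g (c W) <= im W) -> g #|V| <= im V.
Proof.
move=> tfV niV IH.
case: (set_0Vmem V) => [V0|[a aV]].
  rewrite V0 cards0 /= /im; apply/card_gt0P; exists set0; rewrite inE; apply/misP; split.
  - exact: sub0set.
  - by move=> x y; rewrite inE.
  - by move=> x; rewrite inE.
have [b bN] : exists b, b \in N V a by case/set0Pn: (niV a aV) => b; exists b.
have [p Hp Hmax] := longest V.
have Hab : vpath V [:: a; b].
  move: bN; rewrite inE => /andP [bV eab].
  have ab : a != b by apply/eqP => ab; rewrite ab eirr in eab.
  by rewrite /vpath /= !inE aV bV eab ab.
have sz := Hmax _ Hab.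
have sizeV := vpath_size Hp.
case: p Hp Hmax sz sizeV => [|a0 [|a1 [|a2 [|a3 q]]]] Hp Hmax sz sizeV //.
- (* K2 component *)
  have Na0 := first_leaf (erefl _) Hp Hmax.
  have Hr := vpath_rev Hp; rewrite /= in Hr.
  have Na1 : N V a1 = [set a0].
    by apply: (first_leaf (erefl _) Hr) => q' /Hmax.
  have /and3P [U A _] := Hp.
  have a0V : a0 \in V by move: A => /= /andP [].
  rewrite (leaf_split a0V Na0) Na0 Na1.
  have -> : a1 |: [set a0] = a0 |: [set a1] by apply/setP => t; rewrite !inE orbC.
  rewrite addnn -mul2n; apply: leq_trans (ineqK2 _) _; rewrite leq_mul2l /=.
  apply: leq_trans (IH _ (@setD_lt V _ a0 a0V _)); last by rewrite !inE eqxx.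
  apply: g_mono; rewrite leq_subLR.
  apply: leq_trans (@cbound V (a0 |: [set a1]) set0 tfV niV _) _.
    move=> x xV xR _ /ex2 [ea|ea]; exfalso.
      have : x \in N V a0 by rewrite NVP xV esym ea.
      by rewrite Na0 inE => /eqP xa1; move: xR; rewrite xa1 !inE eqxx orbT.
    have : x \in N V a1 by rewrite NVP xV esym ea.
    by rewrite Na1 inE => /eqP xa0; move: xR; rewrite xa0 !inE eqxx.
  by rewrite cards0 addn0 addnC leq_add2r card2le.
-
  have Na0 := first_leaf (erefl _) Hp Hmax.
  have Hr := vpath_rev Hp; rewrite /= in Hr.
  have Na2 : N V a2 = [set a1].
    by apply: (first_leaf (erefl _) Hr) => q' /Hmax.
  have /and3P [U A _] := Hp.
  have a02 : a0 != a2 by apply: uniq_neq U _; rewrite !inE eqxx orbT.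
  move: A => /= /and4P [a0V _ a2V _].
  by move: (tfV a0 a2 a0V a2V a02); rewrite Na0 Na2 eqxx.
-
  have /and3P [U A P] := Hp.
  move: (A) => /= /and5P [a0V a1V a2V a3V _].
  have U1 : uniq [:: a1, a2, a3 & q] by move: U => /andP [].
  have U2 : uniq [:: a2, a3 & q] by move: U1 => /andP [].
  apply: (@main_case V a0 a1 a2 a3) => //.
  - by apply: leq_trans sizeV.
  - exact: (first_leaf (erefl _) Hp Hmax).
  - exact: (second_deg2 tfV Hp Hmax).
  - by move: P => /= /and4P [_ _ ->].
  - by apply: uniq_neq U _; rewrite !inE eqxx /= ?orbT.
  - by apply: uniq_neq U _; rewrite !inE eqxx /= ?orbT.
  - by apply: uniq_neq U1 _; rewrite !inE eqxx /= ?orbT.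
  - by apply: uniq_neq U1 _; rewrite !inE eqxx /= ?orbT.
  - by apply: uniq_neq U2 _; rewrite !inE eqxx /= ?orbT.
  - by move=> b' b'N b'1 b'3; exact: (third_struct tfV Hp Hmax b'N b'1 b'3).
Qed.

Lemma main_all (V : {set T}) : g (c V) <= im V.
Proof.
move: {2}#|V| (erefl #|V|) => n; elim/ltn_ind: n V => n IHn V HV.
have IH : forall W : {set T}, #|W| < #|V| -> g (c W) <= im W.
  by move=> W HW; apply: (IHn #|W|) => //; rewrite -HV.
case: (boolP [exists x in V, exists y in V, (x != y) && (N V x == N V y)]).
  move=> /existsP [x /andP [xV /existsP [y /andP [yV /andP [xy /eqP Nxy]]]]].
  rewrite (twin_rm xV yV xy Nxy); apply: leq_trans (IH _ (@setD_lt V _ x xV _)); last by rewrite inE.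
  exact: g_mono (c_twin xV yV xy Nxy).
move=> notw.
have tfV : tf V.
  move=> x y xV yV xy; apply/negP => /eqP Nxy; move/negP: notw; apply.
  by apply/existsP; exists x; rewrite xV; apply/existsP; exists y; rewrite yV xy Nxy eqxx.
case: (boolP [exists z in V, N V z == set0]).
  move=> /existsP [z /andP [zV /eqP Nz]].
  rewrite (iso_rm zV Nz); apply: leq_trans (IH _ (@setD_lt V _ z zV _)); last by rewrite inE.
  exact: g_mono (c_iso zV Nz).
move=> noi.
have niV : noiso V.
  move=> x xV; apply/negP => /eqP Nx; move/negP: noi; apply.
  by apply/existsP; exists x; rewrite xV Nx eqxx.
apply: leq_trans (core tfV niV IH); exact: g_mono (c_le V).
Qed.


Lemma imax_im : imax e = im setT.
Proof.
rewrite /imax /im; apply: eq_card => S; rewrite !inE.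
apply/maxsetP/misP => [[Sind Smax]|[_ Sind Sdom]].
  have Ind : forall A : {set T}, reflect (forall x y, x \in A -> y \in A -> ~~ e x y) (independent e A).
    move=> A; apply: (iffP forallP) => [H x y xA yA|H x].
      by move: (H x); rewrite xA /= => /forallP /(_ y); rewrite yA.
    apply/implyP => xA; apply/forallP => y; apply/implyP => yA; exact: H.
  move/Ind: Sind => Sind; split => //.
  move=> x _ xS; case: (boolP [exists y in S, e x y]) => [/existsP [y /andP [yS exy]]|H].
    by exists y.
  exfalso; have : x |: S = S.
    apply: Smax; last exact: subsetUr.
    apply/Ind => a b; rewrite !inE => /orP [/eqP ->|aS] /orP [/eqP ->|bS].
    - by rewrite eirr.
    - by apply/negP => exb; move/negP: H; apply; apply/existsP; exists b; rewrite bS.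
    - by apply/negP => eax; move/negP: H; apply; apply/existsP; exists a; rewrite aS esym.
    - exact: Sind.
  by move/setP => /(_ x); rewrite !inE eqxx (negbTE xS).
split.
  apply/forallP => x; apply/implyP => xS; apply/forallP => y; apply/implyP => yS; exact: Sind.
move=> B Bind SB; apply/eqP; rewrite eqEsubset SB andbT; apply/subsetP => x xB.
apply/negPn/negP => xS; have [y yS exy] := Sdom x (in_setT x) xS.
move: Bind => /forallP /(_ x); rewrite xB /= => /forallP /(_ y).
by rewrite (subsetP SB _ yS) exy.
Qed.

Lemma c_setT : twin_free e -> #|T|.-1 <= c setT.
Proof.
move=> tw; rewrite /c.
set I := [set N setT x | x in setT].
have HI : #|I| = #|T|.
  rewrite card_in_imset ?cardsT // => x y _ _ Nxy; apply/eqP/negPn/negP => xy.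
  move: (tw x y xy); rewrite /nbhd.
  have -> : [set z | e x z] = N setT x by apply/setP => z; rewrite !inE.
  have -> : [set z | e y z] = N setT y by apply/setP => z; rewrite !inE.
  by rewrite Nxy eqxx.
rewrite -HI (cardsD1 set0 I).
by case: (set0 \in I); rewrite /= ?add1n ?add0n ?leq_pred.
Qed.


End S.

Theorem corollary4p8 (T : finType) (e : rel T) :
  is_forest e -> twin_free e -> 2 <= #|T| -> f #|T|.-1 <= imax e.
Proof.
move=> [esym [eirr eacyc]] tw _.
apply: leq_trans (f_le_g _) _; rewrite (imax_im esym eirr).
apply: leq_trans (main_all esym eirr eacyc setT); exact: g_mono (c_setT tw).
Qed.
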